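(* Let $\mathbf L=(L,\vee,\wedge,0,1)$ be a complemented modular lattice with $0\ne1$ and let $\Phi$ be a congruence of the semilattice $(L,\wedge)$. Then: (i) $[1]\Phi$ is a deductive system of $\mathbf L$; (ii) $\Theta([1]\Phi)\subseteq\Phi$.
   Context: For $a\in L$, $a^+:=\{x\in L\mid a\vee x=1,\ a\wedge x=0\}$ (the set of all complements of $a$), and $a\to b:=\{x\vee(a\wedge b)\mid x\in a^+\}$. A deductive system of $\mathbf L$ is a subset $D\subseteq L$ such that $1\in D$, and whenever $a\in D$, $b\in L$ and $a\to b\subseteq D$, then $b\in D$. For a deductive system $D$, $\Theta(D):=\{(x,y)\in L^2\mid x\to y\subseteq D\text{ and }y\to x\subseteq D\}$. $[1]\Phi$ denotes the $\Phi$-class of $1$. *)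

(* Defs.v *)
From HB Require Import structures.
From mathcomp Require Import all_boot all_order.
Set Implicit Arguments. Unset Strict Implicit. Unset Printing Implicit Defensive.
Import Order.TTheory.
Local Open Scope order_scope.

(* Bounded lattice L = (L, `|`, `&`, \bot, \top); \bot plays 0, \top plays 1. *)
Section Defs.
Context {disp : Order.disp_t} {L : tbLatticeType disp}.

Definition modular_lattice : Prop :=
  forall x y z : L, x <= z -> x `|` (y `&` z) = (x `|` y) `&` z.

Definition compls (a : L) : L -> Prop :=
  fun x => a `|` x = \top /\ a `&` x = \bot.

Definition complemented_lattice : Prop :=
  forall a : L, exists x, compls a x.

Definition imp (a b : L) : L -> Prop :=
  fun y => exists2 x, compls a x & y = x `|` (a `&` b).

Definition subset (A B : L -> Prop) : Prop := forall x, A x -> B x.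

Definition deductive_system (D : L -> Prop) : Prop :=
  D \top /\ (forall a b : L, D a -> subset (imp a b) D -> D b).

Definition Theta (D : L -> Prop) : L -> L -> Prop :=
  fun x y => subset (imp x y) D /\ subset (imp y x) D.

Definition meet_congruence (Phi : L -> L -> Prop) : Prop :=
  [/\ (forall x, Phi x x),
      (forall x y, Phi x y -> Phi y x),
      (forall x y z, Phi x y -> Phi y z -> Phi x z) &
      (forall x y z w, Phi x y -> Phi z w -> Phi (x `&` z) (y `&` w))].

Definition class_top (Phi : L -> L -> Prop) : L -> Prop := fun x => Phi \top x.

End Defs.

(* Main.v *)
Require Import Defs.
From HB Require Import structures.
From mathcomp Require Import all_boot all_order.
Import Order.TTheory.
Local Open Scope order_scope.

Lemma key (disp : Order.disp_t) (L : tbLatticeType disp) (a b c : L) :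
  modular_lattice (L := L) -> compls a c -> a `&` (c `|` (a `&` b)) = a `&` b.
Proof.
move=> Hm [_ H0].
have := Hm (a `&` b) c a (leIl _ _).
rewrite (meetC c a) H0 joinx0 => E.
by rewrite [RHS]E meetC (joinC c).
Qed.

Lemma step (disp : Order.disp_t) (L : tbLatticeType disp)
  (Phi : L -> L -> Prop) (a b : L) :
  modular_lattice (L := L) -> complemented_lattice (L := L) ->
  meet_congruence Phi ->
  Defs.subset (imp a b) (class_top Phi) -> Phi a (a `&` b).
Proof.
move=> Hm Hc [Hr Hs Ht Hmeet] Hi.
have [c Hac] := Hc a.
have H1 : Phi \top (c `|` (a `&` b)) by apply: Hi; exists c.
have := Hmeet _ _ _ _ (Hr a) H1.
by rewrite meetx1 (@key _ _ a b c Hm Hac).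
Qed.

Theorem proposition8 (disp : Order.disp_t) (L : tbLatticeType disp)
  (Phi : L -> L -> Prop) :
  modular_lattice (L := L) -> complemented_lattice (L := L) ->
  (\bot : L) != \top ->
  meet_congruence Phi ->
  deductive_system (class_top Phi) /\
  (forall x y : L, Theta (class_top Phi) x y -> Phi x y).
Proof.
move=> Hm Hc _ HPhi.
have HP := HPhi; case: HPhi => [Hr Hs Ht Hmeet].
split.
  split; first exact: Hr.
  move=> a b Ha Hi; rewrite /class_top.
  have H1 := @step _ _ Phi a b Hm Hc HP Hi.
  have H2 : Phi \top (a `&` b) by apply: Ht Ha H1.
  have H3 := Hmeet _ _ _ _ H2 (Hr b).
  rewrite meet1x -meetA meetxx in H3.
  by apply: Ht H2 (Hs _ _ H3).
move=> x y [Hxy Hyx].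
have H1 := @step _ _ Phi x y Hm Hc HP Hxy.
have H2 := @step _ _ Phi y x Hm Hc HP Hyx.
rewrite meetC in H2.
by apply: Ht H1 (Hs _ _ H2).
Qed.
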